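(* Let $N$ be a positive even integer and $\alpha,\beta$ real; put $\sigma=\alpha+\beta$. Define the rational functions $$E_1(x)=\frac{(x+3-\alpha+\beta)(x+3-\sigma)(x-1-2N+\sigma)}{4(x+1)(x+3)},\qquad E_2(x)=-\frac{(x-1+\sigma)(x-1+\alpha-\beta)(x-1+2N-\sigma)}{4(x-1)(x-3)},$$ $$G_1(x)=\frac{(\alpha^2-\beta^2)(x+\sigma-2N-1)}{(x^2-1)(x+3)},\qquad G_2(x)=\frac{(2N+2-\sigma)\big((x+\alpha-1)^2-\beta^2\big)}{(x^2-1)(x-3)},$$ and the operator $$(Hf)(x)=E_1(x)\big(f(x+4)-f(x)\big)+E_2(x)\big(f(x-4)-f(x)\big)+G_1(x)\big(f(-x-2)-f(x)\big)+G_2(x)\big(f(-x+2)-f(x)\big).$$ Then for every $n\in\{0,1,\dots,N\}$ the monic dual $-1$ Hahn polynomial $P_n$ satisfies $(HP_n)(x)=2n\,P_n(x)$ for all $x\notin\{\pm1,\pm3\}$ (in particular $HP_n$ is a polynomial of degree $n$).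
   Context: For $N$ even: $b_n^{(-1)}=2N+1-\sigma$ for $n$ even, $b_n^{(-1)}=-2N-3+\sigma$ for $n$ odd; $u_n^{(-1)}=4n(\alpha-n)$ for $n$ even, $u_n^{(-1)}=4(N-n+1)(n+\beta-N-1)$ for $n$ odd. The monic dual $-1$ Hahn polynomials are defined by $P_{-1}=0$, $P_0=1$, $P_{n+1}(x)=(x-b_n^{(-1)})P_n(x)-u_n^{(-1)}P_{n-1}(x)$ for $n\ge0$. *)

(* Defs.v *)
From HB Require Import structures.
From mathcomp Require Import all_boot all_order all_algebra.
Set Implicit Arguments. Unset Strict Implicit. Unset Printing Implicit Defensive.
Import Order.TTheory GRing.Theory Num.Theory.
Local Open Scope ring_scope.

Section DualHahn.
Variable R : realFieldType.
Variables (N : nat) (alpha beta : R).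

Definition sigma : R := alpha + beta.

(* recurrence coefficients b_n^{(-1)}, u_n^{(-1)} for N even *)
Definition bcoef (n : nat) : R :=
  if ~~ odd n then (2 * N%:R + 1 - sigma) else (- 2 * N%:R - 3 + sigma).

Definition ucoef (n : nat) : R :=
  if ~~ odd n then 4 * n%:R * (alpha - n%:R)
  else 4 * (N%:R - n%:R + 1) * (n%:R + beta - N%:R - 1).

(* dhPair n = (P_{n-1}, P_n), with P_{-1} = 0, P_0 = 1 *)
Fixpoint dhPair (n : nat) : {poly R} * {poly R} :=
  match n with
  | 0%N => (0, 1)
  | m.+1 => let: (a, b) := dhPair m in
            (b, ('X - (bcoef m)%:P) * b - (ucoef m)%:P * a)
  end.

Definition dualHahnP (n : nat) : {poly R} := (dhPair n).2.

Definition E1 (x : R) : R :=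
  (x + 3 - alpha + beta) * (x + 3 - sigma) * (x - 1 - 2 * N%:R + sigma)
  / (4 * (x + 1) * (x + 3)).
Definition E2 (x : R) : R :=
  - ((x - 1 + sigma) * (x - 1 + alpha - beta) * (x - 1 + 2 * N%:R - sigma)
  / (4 * (x - 1) * (x - 3))).
Definition G1 (x : R) : R :=
  (alpha ^+ 2 - beta ^+ 2) * (x + sigma - 2 * N%:R - 1)
  / ((x ^+ 2 - 1) * (x + 3)).
Definition G2 (x : R) : R :=
  (2 * N%:R + 2 - sigma) * ((x + alpha - 1) ^+ 2 - beta ^+ 2)
  / ((x ^+ 2 - 1) * (x - 3)).

Definition Hop (f : R -> R) (x : R) : R :=
  E1 x * (f (x + 4) - f x) + E2 x * (f (x - 4) - f x)
  + G1 x * (f (- x - 2) - f x) + G2 x * (f (- x + 2) - f x).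

End DualHahn.

(* Main.v *)
Require Import Defs.
From HB Require Import structures.
From mathcomp Require Import all_boot all_order all_algebra.
From mathcomp Require Import ring lra.
Import Order.TTheory GRing.Theory Num.Theory.
Local Open Scope ring_scope.

Section S.
Variable R : realFieldType.
Variables (N : nat) (alpha beta : R).
Local Notation H := (Hop N alpha beta).
Definition cc : R := 2 * N%:R + 2 - sigma alpha beta.
Definition Rop (f : R -> R) (x : R) : R := f (- x - 2) + cc * (f x - f (- x - 2)) / (x + 1).
Definition k1 : R := 8 * beta - 8 * alpha - 16 * N%:R.
Definition k2 : R := 8 * alpha - 8 * beta + 16 * N%:R - 16 * N%:R * beta + 16 * N%:R ^+ 2.

Lemma Qid (f : R -> R) (x : R) : x != 1 -> x != -1 -> x != 3 -> x != -3 -> x != -5 ->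
  x ^+ 2 * H f x - 2 * x * H (fun y => y * f y) x + H (fun y => y * (y * f y)) x
  = 2 * cc * (H (fun y => y * Rop f y) x - x * H (Rop f) x) - 8 * cc * H (Rop f) x
    + k1 * f x + 16 * H f x + k2 * Rop f x.
Proof.
move=> h1 h2 h3 h4 h5.
rewrite /Hop /Rop.
have -> : - (x + 4) - 2 = - x - 6 by ring.
have -> : - (x - 4) - 2 = - x + 2 by ring.
have -> : - (- x - 2) - 2 = x by ring.
have -> : - (- x + 2) - 2 = x - 4 by ring.
set a0 := f x. set a1 := f (x + 4). set a2 := f (x - 4). set a3 := f (- x - 2).
set a4 := f (- x + 2). set a5 := f (- x - 6).
rewrite /E1 /E2 /G1 /G2 /cc /k1 /k2 /sigma.
have n1 : x - 1 != 0 by rewrite subr_eq0.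
have n2 : x + 1 != 0 by rewrite addr_eq0.
have n3 : x - 3 != 0 by rewrite subr_eq0.
have n4 : x + 3 != 0 by rewrite addr_eq0.
have n5 : x + 5 != 0 by rewrite addr_eq0.
field.
rewrite n1 n2 n3 n4 /=.
have -> : x ^+ 2 - 1 = (x - 1) * (x + 1) by ring.
have -> : - x + 2 + 1 = - (x - 3) by ring.
have -> : - x - 2 + 1 = - (x + 1) by ring.
have -> : x + 4 + 1 = x + 5 by ring.
by rewrite mulf_neq0 // !oppr_eq0 n2 n3 n5.
Qed.

Definition pp (k : nat) (y : R) : R := (dualHahnP N alpha beta k).[y].
Definition qq (k : nat) (y : R) : R := ((dhPair N alpha beta k).1).[y].

Lemma ppS k y : pp k.+1 y = (y - bcoef N alpha beta k) * pp k y - ucoef N alpha beta k * qq k y.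
Proof.
rewrite /pp /qq /dualHahnP /=; case: (dhPair _ _ _ k) => a b /=.
by rewrite !hornerE.
Qed.
Lemma qqS k y : qq k.+1 y = pp k y.
Proof. by rewrite /pp /qq /dualHahnP /=; case: (dhPair _ _ _ k). Qed.
Lemma pp0 y : pp 0 y = 1. Proof. by rewrite /pp /dualHahnP /= hornerC. Qed.
Lemma qq0 y : qq 0 y = 0. Proof. by rewrite /qq /= hornerC. Qed.

Lemma ucoef0 : ucoef N alpha beta 0 = 0.
Proof. by rewrite /ucoef /= mulr0 mul0r. Qed.

Definition pts (x y : R) := (y = x \/ y = x + 4 \/ y = x - 4 \/ y = - x - 2 \/ y = - x + 2).

Lemma Hpts (f g : R -> R) x : (forall y, pts x y -> f y = g y) -> H f x = H g x.
Proof.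
move=> h; rewrite /Hop !h // /pts; tauto.
Qed.

Lemma Hlin5 (f1 f2 f3 f4 f5 : R -> R) (a1 a2 a3 a4 a5 : R) x :
  H (fun y => a1 * f1 y + a2 * f2 y + a3 * f3 y + a4 * f4 y + a5 * f5 y) x
  = a1 * H f1 x + a2 * H f2 x + a3 * H f3 x + a4 * H f4 x + a5 * H f5 x.
Proof. rewrite /Hop; ring. Qed.

Lemma Hscale (f : R -> R) a x : H (fun y => a * f y) x = a * H f x.
Proof. rewrite /Hop; ring. Qed.

Lemma Hzero (f : R -> R) x : (forall y, f y = 0) -> H f x = 0.
Proof. move=> h; rewrite /Hop !h; ring. Qed.

Lemma Rlin (f g : R -> R) a b y :
  Rop (fun t => a * f t + b * g t) y = a * Rop f y + b * Rop g y.
Proof. rewrite /Rop; ring. Qed.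

Lemma RX (f : R -> R) y : y != -1 ->
  Rop (fun t => t * f t) y = - y * Rop f y + 2 * cc * f y - 2 * Rop f y.
Proof.
move=> hy; have hy1 : y + 1 != 0 by rewrite addr_eq0.
rewrite /Rop; field => //.
Qed.

Lemma bcoefE k : bcoef N alpha beta k = (-1) ^+ k * cc - 1.
Proof. rewrite -signr_odd /bcoef /cc /sigma; case: (odd k) => /=; ring. Qed.

Lemma Reig k y : y != -1 ->
  Rop (pp k) y = (-1) ^+ k * pp k y /\ Rop (qq k) y = - (-1) ^+ k * qq k y.
Proof.
move=> hy; elim: k => [|k [IHp IHq]].
  by rewrite /Rop !pp0 !qq0; split; ring.
have -> : Rop (qq k.+1) y = Rop (pp k) y by rewrite /Rop !qqS.
rewrite qqS; split; last by rewrite IHp exprS; ring.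
have -> : Rop (pp k.+1) y = Rop (fun t => 1 * (t * pp k t) + (- bcoef N alpha beta k) * pp k t) y
          - ucoef N alpha beta k * Rop (qq k) y.
  by rewrite /Rop !ppS; ring.
rewrite Rlin RX // IHp IHq ppS bcoefE exprS.
rewrite -signr_odd; case: (odd k) => /=; ring.
Qed.

Lemma alg (m : nat) (x A0 A1 A2 V W h2 : R) :
  A1 = x * A0 - bcoef N alpha beta m * A0 - V ->
  A2 = x * A1 - bcoef N alpha beta m.+1 * A1 - ucoef N alpha beta m.+1 * A0 ->
  W = x * V - ucoef N alpha beta m * A0 - bcoef N alpha beta m.+1 * V ->
  let e := (-1) ^+ m : R in
  let HX := 2 * (m%:R + 1) * A1 + bcoef N alpha beta m * (2 * m%:R * A0) + 2 * (m%:R - 1) * V in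
  let HX2 := h2 + bcoef N alpha beta m.+1 * (2 * (m%:R + 1) * A1)
     + ucoef N alpha beta m.+1 * (2 * m%:R * A0) + bcoef N alpha beta m * HX
     + ucoef N alpha beta m * (2 * m%:R * A0) + bcoef N alpha beta m.+1 * (2 * (m%:R - 1) * V)
     + 2 * (m%:R - 2) * W in
  x ^+ 2 * (2 * m%:R * A0) - 2 * x * HX + HX2
  = 2 * cc * (e * HX - x * (e * (2 * m%:R * A0))) - 8 * cc * (e * (2 * m%:R * A0))
    + k1 * A0 + 16 * (2 * m%:R * A0) + k2 * (e * A0) ->
  h2 = 2 * (m%:R + 2) * A2.
Proof.
move=> eA1 eA2 eW e HX HX2; rewrite /HX2 /HX /e {HX2 HX e}.
subst A2 W A1.
rewrite /bcoef /ucoef /cc /k1 /k2 /sigma -signr_odd /= -!natr1.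
case: (odd m) => /= EQ.
- lra.
- lra.
Qed.

Definition VV (m : nat) (y : R) : R := ucoef N alpha beta m * qq m y.
Definition WW (m : nat) (y : R) : R :=
  if m is j.+1 then ucoef N alpha beta j.+1 * (ucoef N alpha beta j * qq j y) else 0.

Definition okp (x : R) := [&& x != 1, x != -1, x != 3, x != -3 & x != -5].
Definition EigF (g : R -> R) (l : R) := forall x, okp x -> H g x = l * g x.

Lemma xpp m y : y * pp m y = pp m.+1 y + bcoef N alpha beta m * pp m y + VV m y.
Proof. rewrite ppS /VV; ring. Qed.

Lemma xVV m y : y * VV m y = ucoef N alpha beta m * pp m y + bcoef N alpha beta m.+1 * VV m y + WW m y.
Proof.
case: m => [|j]; first by rewrite /VV /WW ucoef0 qq0; ring.
rewrite /VV /WW qqS mulrCA xpp /= [bcoef _ _ _ j.+2]/bcoef [bcoef _ _ _ j]/bcoef /=.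
by rewrite !negbK /VV; ring.
Qed.

Lemma okp_pts x y : okp x -> pts x y -> y != -1.
Proof.
case/and5P => h1 h2 h3 h4 h5; case=> [->|[->|[->|[->|->]]]] //.
- by apply: contra h5 => /eqP h; apply/eqP; rewrite -(addrK 4 x) h; ring.
- by apply: contra h3 => /eqP h; apply/eqP; rewrite -(subrK 4 x) h; ring.
- by apply: contra h2 => /eqP h; apply/eqP; rewrite -[x]opprK -(subrK 2 (- x)) h; ring.
- by apply: contra h3 => /eqP h; apply/eqP; rewrite -[x]opprK -(addrK 2 (- x)) h; ring.
Qed.

Lemma step m : EigF (pp m) (2 * m%:R) -> EigF (pp m.+1) (2 * (m%:R + 1)) ->
  EigF (VV m) (2 * (m%:R - 1)) -> EigF (WW m) (2 * (m%:R - 2)) ->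
  EigF (pp m.+2) (2 * (m%:R + 2)).
Proof.
move=> Ep Ep1 EV EW x hx.
have [h1 h2 h3 h4 h5] := and5P hx.
have Q := Qid (pp m) x h1 h2 h3 h4 h5.
rewrite !Ep // in Q.
set b0 := bcoef N alpha beta m in Q *.
set b1 := bcoef N alpha beta m.+1 in Q *.
set u0 := ucoef N alpha beta m in Q *.
set u1 := ucoef N alpha beta m.+1 in Q *.
have HX : H (fun y => y * pp m y) x
   = 2 * (m%:R + 1) * pp m.+1 x + b0 * (2 * m%:R * pp m x) + 2 * (m%:R - 1) * VV m x.
  rewrite (@Hpts _ (fun y => 1 * pp m.+1 y + b0 * pp m y + 1 * VV m y + 0 * pp m y + 0 * pp m y)); last first.
    by move=> y _ /=; rewrite xpp -/b0; ring.
  rewrite Hlin5 Ep1 // Ep // EV //; ring.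
have HX2 : H (fun y => y * (y * pp m y)) x
   = H (pp m.+2) x + b1 * (2 * (m%:R + 1) * pp m.+1 x)
     + u1 * (2 * m%:R * pp m x)
     + b0 * (2 * (m%:R + 1) * pp m.+1 x + b0 * (2 * m%:R * pp m x) + 2 * (m%:R - 1) * VV m x)
     + u0 * (2 * m%:R * pp m x) + b1 * (2 * (m%:R - 1) * VV m x)
     + 2 * (m%:R - 2) * WW m x.
  rewrite (@Hpts _ (fun y => 1 * pp m.+2 y + (b1 + b0) * pp m.+1 y + (u1 + b0 * b0 + u0) * pp m y
                      + (b0 + b1) * VV m y + 1 * WW m y)); last first.
    move=> y _ /=.
    have E1 := xpp m y; have E2 := xpp m.+1 y; have E3 := xVV m y.
    have E4 : VV m.+1 y = u1 * pp m y by rewrite /VV qqS.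
    rewrite E1 (_ : y * (pp m.+1 y + b0 * pp m y + VV m y)
                  = y * pp m.+1 y + b0 * (y * pp m y) + y * VV m y); last by ring.
    rewrite E2 E1 E3 E4; rewrite -/b0 -/b1 -/u0 -/u1; ring.
  rewrite Hlin5 Ep1 // Ep // EV // EW //; ring.
have RE : forall y, y != -1 -> Rop (pp m) y = (-1) ^+ m * pp m y.
  by move=> y hy; case: (Reig m y hy).
have HR : H (Rop (pp m)) x = (-1) ^+ m * (2 * m%:R * pp m x).
  rewrite (@Hpts _ (fun y => (-1) ^+ m * pp m y)); last first.
    by move=> y hy /=; rewrite RE // (okp_pts _ _ hx hy).
  by rewrite Hscale Ep.
have HXR : H (fun y => y * Rop (pp m) y) x = (-1) ^+ m *
   (2 * (m%:R + 1) * pp m.+1 x + b0 * (2 * m%:R * pp m x) + 2 * (m%:R - 1) * VV m x).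
  rewrite (@Hpts _ (fun y => (-1) ^+ m * (y * pp m y))); last first.
    by move=> y hy /=; rewrite RE ?(okp_pts _ _ hx hy) //; ring.
  by rewrite Hscale HX.
rewrite HR HXR HX2 HX RE // in Q.
apply: (@alg m x (pp m x) (pp m.+1 x) (pp m.+2 x) (VV m x) (WW m x)) => //.
- by rewrite xpp; ring.
- by rewrite xpp /VV qqS; ring.
- by rewrite xVV; ring.
Qed.

Lemma base0 : EigF (pp 0) (2 * 0%:R).
Proof. by move=> x _; rewrite /Hop !pp0; ring. Qed.

Lemma base1 : EigF (pp 1) (2 * (0%:R + 1)).
Proof.
move=> x /and5P [h1 h2 h3 h4 h5].
have n1 : x - 1 != 0 by rewrite subr_eq0.
have n2 : x + 1 != 0 by rewrite addr_eq0.
have n3 : x - 3 != 0 by rewrite subr_eq0.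
have n4 : x + 3 != 0 by rewrite addr_eq0.
rewrite /Hop !ppS !pp0 !qq0 /E1 /E2 /G1 /G2 /bcoef /ucoef /sigma /=.
field.
rewrite n1 n2 n3 n4 /=.
have -> : x ^+ 2 - 1 = (x - 1) * (x + 1) by ring.
by rewrite mulf_neq0.
Qed.

Lemma inv m : [/\ EigF (pp m) (2 * m%:R), EigF (pp m.+1) (2 * (m%:R + 1)),
   EigF (VV m) (2 * (m%:R - 1)) & EigF (WW m) (2 * (m%:R - 2))].
Proof.
elim: m => [|m [Ep Ep1 EV EW]].
  split; [exact: base0 | exact: base1 | |].
  - move=> x _; rewrite Hzero; last by move=> y; rewrite /VV qq0; ring.
    by rewrite /VV qq0; ring.
  - move=> x _; rewrite Hzero //; rewrite /WW; ring.
split.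
- by rewrite -[m.+1%:R]natr1.
- have := @step m Ep Ep1 EV EW.
  by rewrite -[m.+1%:R]natr1 (_ : m%:R + 1 + 1 = m%:R + 2 :> R) //; ring.
- move=> x hx.
  rewrite (@Hpts _ (fun y => ucoef N alpha beta m.+1 * pp m y)); last first.
    by move=> y _ /=; rewrite /VV qqS.
  by rewrite Hscale Ep // /VV qqS -[m.+1%:R]natr1; ring.
- move=> x hx.
  rewrite (@Hpts _ (fun y => ucoef N alpha beta m.+1 * VV m y)); last first.
    by move=> y _ /=; rewrite /VV /WW.
  by rewrite Hscale EV // /VV /WW -[m.+1%:R]natr1; ring.
Qed.

Definition Npoly (P : {poly R}) (l : R) : {poly R} :=
  (4^-1)%:P * (('X + (3 - alpha + beta)%:P) * ('X + (3 - sigma alpha beta)%:P)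
      * ('X + (- 1 - 2 * N%:R + sigma alpha beta)%:P) * ('X - 1%:P) * ('X - 3%:P))
    * (P \Po ('X + 4%:P) - P)
  - (4^-1)%:P * (('X + (- 1 + sigma alpha beta)%:P) * ('X + (- 1 + alpha - beta)%:P)
      * ('X + (- 1 + 2 * N%:R - sigma alpha beta)%:P) * ('X + 1%:P) * ('X + 3%:P))
    * (P \Po ('X - 4%:P) - P)
  + ((alpha ^+ 2 - beta ^+ 2)%:P * ('X + (sigma alpha beta - 2 * N%:R - 1)%:P) * ('X - 3%:P))
    * (P \Po (- 'X - 2%:P) - P)
  + ((2 * N%:R + 2 - sigma alpha beta)%:P * (('X + (alpha - 1)%:P) ^+ 2 - (beta ^+ 2)%:P)
      * ('X + 3%:P)) * (P \Po (- 'X + 2%:P) - P)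
  - (l%:P * (('X ^+ 2 - 1%:P) * ('X ^+ 2 - 9%:P))) * P.

Lemma Npoly_eval P l x : x != 1 -> x != -1 -> x != 3 -> x != -3 ->
  (Npoly P l).[x] = ((x ^+ 2 - 1) * (x ^+ 2 - 9)) * (H (fun y => P.[y]) x - l * P.[x]).
Proof.
move=> h1 h2 h3 h4.
have n1 : x - 1 != 0 by rewrite subr_eq0.
have n2 : x + 1 != 0 by rewrite addr_eq0.
have n3 : x - 3 != 0 by rewrite subr_eq0.
have n4 : x + 3 != 0 by rewrite addr_eq0.
rewrite /Npoly !(hornerD, hornerN, hornerM, hornerX, hornerC, horner_exp, horner_comp) /Hop /E1 /E2 /G1 /G2.
field.
rewrite n1 n2 n3 n4 /=.
have -> : x ^+ 2 - 1 = (x - 1) * (x + 1) by ring.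
by rewrite mulf_neq0.
Qed.

Lemma ext P l : EigF (fun y => P.[y]) l ->
  forall x, x != 1 -> x != -1 -> x != 3 -> x != -3 -> H (fun y => P.[y]) x = l * P.[x].
Proof.
move=> E x h1 h2 h3 h4.
have Z : Npoly P l = 0.
  pose rs := [seq i%:R + 4 | i <- iota 0 (size (Npoly P l))] : seq R.
  apply: (@roots_geq_poly_eq0 _ _ rs); last by rewrite size_map size_iota.
  - apply/allP => _ /mapP [i _ ->].
    have hi : 0 <= i%:R :> R := ler0n _ _.
    have ok : okp (i%:R + 4).
      apply/and5P; split; rewrite gt_eqF //; lra.
    rewrite /root Npoly_eval; try by case/and5P: ok.
    by rewrite E // subrr mulr0.
  - rewrite map_inj_uniq ?iota_uniq // => i j /addIr /eqP.
    by rewrite eqr_nat => /eqP.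
have := Npoly_eval P l x h1 h2 h3 h4; rewrite Z horner0 => /esym /eqP.
rewrite mulf_eq0 subr_eq0 => /orP [|/eqP //].
have -> : (x ^+ 2 - 1) * (x ^+ 2 - 9) = (x - 1) * (x + 1) * ((x - 3) * (x + 3)) by ring.
rewrite !mulf_eq0 !subr_eq0 !addr_eq0 (negPf h1) (negPf h2) (negPf h3) (negPf h4) //.
Qed.
End S.

Theorem mainTheorem7 (R : realFieldType) (N : nat) (alpha beta : R)
  (hN : (0 < N)%N) (hNeven : ~~ odd N) (n : nat) (hn : (n <= N)%N) (x : R)
  (hx1 : x != 1) (hxm1 : x != -1) (hx3 : x != 3) (hxm3 : x != -3) :
  Hop N alpha beta (fun y => (dualHahnP N alpha beta n).[y]) x
  = 2 * n%:R * (dualHahnP N alpha beta n).[x].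
Proof.
have [E _ _ _] := @inv R N alpha beta n.
exact: (@ext R N alpha beta _ _ E x hx1 hxm1 hx3 hxm3).
Qed.
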